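(* In the dynamic weighted storage system described in the context, each phase of a read/write operation always finishes in the last installed view in the system ($lastview$); that is, when a client completes a phase by having collected replies carrying its view $cview$ with weights summing to more than $n/2$, that view equals $lastview$.
   Context: System: servers $S=\{s_1,\dots,s_n\}$ and clients; reliable links; asynchronous; crash failures only; at most $f$ servers crash and $2f+1\le n$. Views form a sequence $v_0,v_1,\dots$ with $v_{k+1}=v_k.succ$; $v<w$ means $w$ is obtained from $v$ by applying $succ$ one or more times. Each server $s$ has a current view $s.cview$ (initially $v_0$) and a weight in each view; in every view each server's weight is strictly between $\mathbb{wl}=n/(2(n-f))$ and $\mathbb{wu}=n/(2f)$ and the total weight is at most $n$. A weighted majority for view $v$ is a set of servers whose weights in $v$ sum to more than $n/2$. View changer (server $s$ with $s.cview=v$): on timeout it sends $\langle\text{change\_view},v.succ\rangle$; once it has received or sent change\_view for $v.succ$ it forwards it if needed, disables read/write operations, sends $\langle\text{state\_update},(val,ts,cid),v,w\rangle$ to all servers (it has then uninstalled $v$), waits for state\_update messages for view $v$ with weights summing to more than $n/2$, adopts the value with largest $(ts,cid)$, sets $s.cview\leftarrow v.succ$ (installs $v.succ$) and re-enables read/write operations. A view $v$ is installed in the system once some server installs it and no server has a larger current view; $lastview$ is the last view installed in the system. Read/write protocol: each client keeps $cview$ (initially $v_0$). Each operation has two phases; in each phase the client sends a request tagged with $cview$ to all servers; a server (when read/write operations are enabled) handles it (phase 2: stores the value if its $(ts,cid)$ is larger and the views match) and replies with its current view and, if that equals the request's view, its weight in it (else $\bot$), plus its register in phase 1. The client collects replies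 whose view equals $cview$; on a reply with another view $v$ it sets $cview\leftarrow v$ if $cview<v$ and restarts the operation; the phase finishes when the collected weights exceed $n/2$. *)

(* Defs.v *)
From HB Require Import structures.
From mathcomp Require Import all_boot all_order all_algebra.
Set Implicit Arguments. Unset Strict Implicit. Unset Printing Implicit Defensive.
Import Order.TTheory GRing.Theory Num.Theory.
Local Open Scope ring_scope.

Section Model.
Variable R : realFieldType.
Variable n : nat.

(* Views: the view v_k is represented by the natural number k, so
   v.succ = v.+1 and  v < w  is the order on nat. *)

Definition reg := (nat * nat * nat)%type.
Definition rval (r : reg) : nat := r.1.1.
Definition rts (r : reg) : nat := r.1.2.
Definition rcid (r : reg) : nat := r.2.
Definition reg_lt (a b : reg) : bool :=
  (rts a < rts b)%N || ((rts a == rts b) && (rcid a < rcid b)%N).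
Definition reg_max (a b : reg) : reg := if reg_lt a b then b else a.
Definition reg0 : reg := (0, 0, 0)%N.

Inductive msg :=
| ChangeView of nat
| StateUpdate of reg & nat              (* <state_update, reg, v> (v = view uninstalled) *)
| Request of nat & bool & nat & reg     (* attempt tag, phase-2?, client view, value (phase 2) *)
| Reply of nat & nat & option R & reg.  (* attempt tag, server view, weight or bot, register *)

Inductive node := Srv of 'I_n | Cli of nat.
Record packet := Pkt { psrc : node; pdst : node; pbody : msg }.

Record sstate := SState {
  s_cview : nat;
  s_enabled : bool;
  s_changing : bool;                (* has sent state_update for s_cview (uninstalled it) *)
  s_reg : reg;
  s_cvrecv : nat -> bool;
  s_sus : nat -> 'I_n -> option reg;(* state_update received: view -> sender -> register *)
  s_crashed : bool }.

Inductive op := OpRead | OpWrite of nat.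
Inductive cphase :=
| Idle
| Ph1 of op & nat & ('I_n -> option (R * reg))   (* op, attempt tag, collected replies *)
| Ready2 of op & reg                              (* phase 1 done, value for phase 2 *)
| Ph2 of op & reg & nat & ('I_n -> option R).     (* op, value, attempt tag, collected *)

Record cstate := CState { c_cview : nat; c_phase : cphase; c_next : nat }.

Record gstate := GState { srv : 'I_n -> sstate; cli : nat -> cstate; net : seq packet }.

Inductive label := LStart of nat | LFinish of nat | LInternal.

Definition upd {A : Type} (F : 'I_n -> A) (i : 'I_n) (x : A) : 'I_n -> A :=
  fun j => if j == i then x else F j.
Definition updc (F : nat -> cstate) (c : nat) (x : cstate) : nat -> cstate :=
  fun d => if d == c then x else F d.

Definition bcast (a : node) (m : msg) : seq packet :=
  [seq Pkt a (Srv i) m | i <- enum 'I_n].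

Definition crash (s : sstate) : sstate :=
  SState (s_cview s) (s_enabled s) (s_changing s) (s_reg s) (s_cvrecv s) (s_sus s) true.

Definition start_vc (s : sstate) : sstate :=
  SState (s_cview s) false true (s_reg s) (s_cvrecv s) (s_sus s) (s_crashed s).
Definition vc_msgs (i : 'I_n) (s : sstate) : seq packet :=
  bcast (Srv i) (ChangeView (s_cview s).+1) ++
  bcast (Srv i) (StateUpdate (s_reg s) (s_cview s)).

Definition recv_cv (s : sstate) (w : nat) : sstate :=
  SState (s_cview s) (s_enabled s) (s_changing s) (s_reg s)
    (fun x => (x == w) || s_cvrecv s x) (s_sus s) (s_crashed s).
Definition recv_su (s : sstate) (j : 'I_n) (r : reg) (v : nat) : sstate :=
  SState (s_cview s) (s_enabled s) (s_changing s) (s_reg s) (s_cvrecv s)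
    (fun v' j' => if (v' == v) && (j' == j) then Some r else s_sus s v' j')
    (s_crashed s).

Definition su_weight (wt : nat -> 'I_n -> R) (s : sstate) (v : nat) : R :=
  \sum_(j < n | s_sus s v j != None) wt v j.

Definition adopted (s : sstate) : reg :=
  foldr (fun j acc => if s_sus s (s_cview s) j is Some r then reg_max r acc else acc)
        reg0 (enum 'I_n).

Definition install (s : sstate) : sstate :=
  SState (s_cview s).+1 true false (adopted s) (s_cvrecv s) (s_sus s) (s_crashed s).

Definition on_request (wt : nat -> 'I_n -> R) (i : 'I_n) (s : sstate)
    (k : nat) (ph2 : bool) (v : nat) (r : reg) : sstate * msg :=
  let reg' := if ph2 && (v == s_cview s) && reg_lt (s_reg s) r then r else s_reg s in
  (SState (s_cview s) (s_enabled s) (s_changing s) reg' (s_cvrecv s) (s_sus s) (s_crashed s),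
   Reply k (s_cview s) (if s_cview s == v then Some (wt (s_cview s) i) else None) (s_reg s)).

Definition start_ph1 (c : nat) (v : nat) (cs : cstate) (o : op) : cstate * seq packet :=
  (CState v (Ph1 o (c_next cs) (fun _ => None)) (c_next cs).+1,
   bcast (Cli c) (Request (c_next cs) false v reg0)).

Definition start_ph2 (c : nat) (cs : cstate) (o : op) (r : reg) : cstate * seq packet :=
  (CState (c_cview cs) (Ph2 o r (c_next cs) (fun _ => None)) (c_next cs).+1,
   bcast (Cli c) (Request (c_next cs) true (c_cview cs) r)).

Definition on_reply (c : nat) (cs : cstate) (i : 'I_n) (k v : nat) (w : option R) (r : reg)
    : cstate * seq packet * label :=
  match c_phase cs with
  | Ph1 o k' col =>
      if k == k' then
        if v == c_cview cs then
          (CState (c_cview cs) (Ph1 o k' (upd col i (Some (odflt 0 w, r)))) (c_next cs),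
           [::], LInternal)
        else if (c_cview cs < v)%N then
          let p := start_ph1 c v cs o in (p.1, p.2, LStart c)
        else (cs, [::], LInternal)
      else (cs, [::], LInternal)
  | Ph2 o r2 k' col =>
      if k == k' then
        if v == c_cview cs then
          (CState (c_cview cs) (Ph2 o r2 k' (upd col i (Some (odflt 0 w)))) (c_next cs),
           [::], LInternal)
        else if (c_cview cs < v)%N then
          let p := start_ph1 c v cs o in (p.1, p.2, LStart c)
        else (cs, [::], LInternal)
      else (cs, [::], LInternal)
  | _ => (cs, [::], LInternal)
  end.

Definition sum1 (col : 'I_n -> option (R * reg)) : R :=
  \sum_(i < n) (if col i is Some (w, _) then w else 0).
Definition sum2 (col : 'I_n -> option R) : R := \sum_(i < n) odflt 0 (col i).
Definition maxreg (col : 'I_n -> option (R * reg)) : reg :=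
  foldr (fun i acc => if col i is Some (_, r) then reg_max r acc else acc) reg0 (enum 'I_n).
Definition ph2reg (c : nat) (o : op) (m : reg) : reg :=
  match o with OpRead => m | OpWrite x => (x, (rts m).+1, c) end.

Inductive step (wt : nat -> 'I_n -> R) (f : nat) : gstate -> label -> gstate -> Prop :=
| StCrash g i :
    ~~ s_crashed (srv g i) -> (#|[set j | s_crashed (srv g j)]| < f)%N ->
    step wt f g LInternal (GState (upd (srv g) i (crash (srv g i))) (cli g) (net g))
| StTimeout g i :
    ~~ s_crashed (srv g i) -> ~~ s_changing (srv g i) ->
    step wt f g LInternal
      (GState (upd (srv g) i (start_vc (srv g i))) (cli g) (net g ++ vc_msgs i (srv g i)))
| StCVTrigger g i :
    ~~ s_crashed (srv g i) -> ~~ s_changing (srv g i) ->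
    s_cvrecv (srv g i) (s_cview (srv g i)).+1 ->
    step wt f g LInternal
      (GState (upd (srv g) i (start_vc (srv g i))) (cli g) (net g ++ vc_msgs i (srv g i)))
| StInstall g i :
    ~~ s_crashed (srv g i) -> s_changing (srv g i) ->
    n%:R / 2 < su_weight wt (srv g i) (s_cview (srv g i)) ->
    step wt f g LInternal (GState (upd (srv g) i (install (srv g i))) (cli g) (net g))
| StRecvCV g i a w l1 l2 :
    net g = l1 ++ Pkt a (Srv i) (ChangeView w) :: l2 -> ~~ s_crashed (srv g i) ->
    step wt f g LInternal (GState (upd (srv g) i (recv_cv (srv g i) w)) (cli g) (l1 ++ l2))
| StRecvSU g i j r v l1 l2 :
    net g = l1 ++ Pkt (Srv j) (Srv i) (StateUpdate r v) :: l2 -> ~~ s_crashed (srv g i) ->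
    step wt f g LInternal (GState (upd (srv g) i (recv_su (srv g i) j r v)) (cli g) (l1 ++ l2))
| StRecvReq g i c k b v r l1 l2 :
    net g = l1 ++ Pkt (Cli c) (Srv i) (Request k b v r) :: l2 ->
    ~~ s_crashed (srv g i) -> s_enabled (srv g i) ->
    step wt f g LInternal
      (GState (upd (srv g) i (on_request wt i (srv g i) k b v r).1) (cli g)
         (l1 ++ l2 ++ [:: Pkt (Srv i) (Cli c) (on_request wt i (srv g i) k b v r).2]))
| StRecvRep g c i k v w r l1 l2 :
    net g = l1 ++ Pkt (Srv i) (Cli c) (Reply k v w r) :: l2 ->
    step wt f g (on_reply c (cli g c) i k v w r).2
      (GState (srv g) (updc (cli g) c (on_reply c (cli g c) i k v w r).1.1)
         (l1 ++ l2 ++ (on_reply c (cli g c) i k v w r).1.2))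
| StInvoke g c o :
    c_phase (cli g c) = Idle ->
    step wt f g (LStart c)
      (GState (srv g) (updc (cli g) c (start_ph1 c (c_cview (cli g c)) (cli g c) o).1)
         (net g ++ (start_ph1 c (c_cview (cli g c)) (cli g c) o).2))
| StFinish1 g c o k col :
    c_phase (cli g c) = Ph1 o k col -> n%:R / 2 < sum1 col ->
    step wt f g (LFinish c)
      (GState (srv g)
         (updc (cli g) c (CState (c_cview (cli g c)) (Ready2 o (ph2reg c o (maxreg col)))
                                 (c_next (cli g c))))
         (net g))
| StStart2 g c o r :
    c_phase (cli g c) = Ready2 o r ->
    step wt f g (LStart c)
      (GState (srv g) (updc (cli g) c (start_ph2 c (cli g c) o r).1)
         (net g ++ (start_ph2 c (cli g c) o r).2))
| StFinish2 g c o r k col :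
    c_phase (cli g c) = Ph2 o r k col -> n%:R / 2 < sum2 col ->
    step wt f g (LFinish c)
      (GState (srv g)
         (updc (cli g) c (CState (c_cview (cli g c)) Idle (c_next (cli g c))))
         (net g)).

Definition init_srv : sstate :=
  SState 0%N true false reg0 (fun _ => false) (fun _ _ => None) false.
Definition init : gstate :=
  GState (fun _ => init_srv) (fun _ => CState 0%N Idle 0%N) [::].

Definition lastview (g : gstate) : nat := (\max_(i < n) s_cview (srv g i))%N.

(* weights: wl < wt v i < wu (cross-multiplied, wl = n/(2(n-f)), wu = n/(2f)),
   and total weight at most n in every view. *)
Definition weights_ok (f : nat) (wt : nat -> 'I_n -> R) : Prop :=
  (forall v i, n%:R < 2%:R * (n - f)%:R * wt v i /\ 2%:R * f%:R * wt v i < n%:R) /\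
  (forall v, \sum_(i < n) wt v i <= n%:R).

End Model.

(* Main.v *)
Require Import Defs.
From mathcomp Require Import all_boot all_order all_algebra.
From mathcomp Require Import lra zify.
Set Implicit Arguments. Unset Strict Implicit. Unset Printing Implicit Defensive.
Import Order.TTheory GRing.Theory Num.Theory.
Local Open Scope ring_scope.

Definition passed (n : nat) (s : sstate n) (w : nat) : bool :=
  (w < s_cview s)%N || ((w == s_cview s) && s_changing s).

Record Inv (R : realFieldType) (n : nat) (wt : nat -> 'I_n -> R) (g : gstate R n) : Prop := {
  inv_en : forall i, s_enabled (srv g i) -> ~~ s_changing (srv g i);
  inv_cv : forall c, (c_cview (cli g c) <= lastview g)%N;
  inv_rep : forall p k v w r, List.In p (net g) -> pbody p = Reply k v w r -> (v <= lastview g)%N;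
  inv_fr_rep : forall p c k v w r, List.In p (net g) -> pdst p = Cli n c ->
     pbody p = Reply k v w r -> (k < c_next (cli g c))%N;
  inv_fr_req : forall p c k b v r, List.In p (net g) -> psrc p = Cli n c ->
     pbody p = Request _ k b v r -> (k < c_next (cli g c))%N;
  inv_maj : forall w, (w < lastview g)%N ->
     n%:R / 2 < \sum_(j < n) (if passed (srv g j) w then wt w j else 0);
  inv_sus : forall i j w, s_sus (srv g i) w j != None -> passed (srv g j) w;
  inv_supkt : forall p j r w, List.In p (net g) -> psrc p = Srv j ->
     pbody p = StateUpdate _ r w -> passed (srv g j) w }.

Lemma in_bcast (R : realFieldType) (n : nat) (a : node n) (m : msg R) q :
  List.In q (bcast a m) -> psrc q = a /\ pbody q = m.
Proof. rewrite /bcast; elim: (enum 'I_n) => //= x s IH [<-|/IH] //. Qed.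

Lemma in_cat (T : Type) (q : T) l1 l2 : List.In q (l1 ++ l2) <-> List.In q l1 \/ List.In q l2.
Proof. split; [exact: List.in_app_or | exact: List.in_or_app]. Qed.

Lemma in_split (T : Type) (q p : T) l1 l2 : List.In q (l1 ++ l2) -> List.In q (l1 ++ p :: l2).
Proof. move/in_cat=> [H|H]; apply/in_cat; [left|right=> /=; right]; done. Qed.

Lemma ltn_bigmax_ex (n : nat) (F : 'I_n -> nat) w :
  (w < \max_(i < n) F i)%N -> exists i, (w < F i)%N.
Proof.
case: (boolP [exists i, (w < F i)%N]) => [/existsP//|/existsPn H].
move=> Hw; exfalso.
have : (\max_(i < n) F i <= w)%N by apply/bigmax_leqP => i _; rewrite leqNgt H.
by rewrite leqNgt Hw.
Qed.

Lemma lastview_ge (R : realFieldType) (n : nat) (g : gstate R n) i :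
  (s_cview (srv g i) <= lastview g)%N.
Proof. exact: (@leq_bigmax _ (fun j => s_cview (srv g j))). Qed.

Lemma lastview_mono (R : realFieldType) (n : nat) (g g' : gstate R n) :
  (forall i, s_cview (srv g i) <= s_cview (srv g' i))%N -> (lastview g <= lastview g')%N.
Proof.
move=> H; apply/bigmax_leqP => i _; apply: leq_trans (H i) _; exact: lastview_ge.
Qed.

Lemma lastview_eq (R : realFieldType) (n : nat) (g g' : gstate R n) :
  (forall i, s_cview (srv g i) = s_cview (srv g' i)) -> lastview g = lastview g'.
Proof. move=> H; by apply: eq_bigr => i _; rewrite H. Qed.

Lemma on_reply_pkts (R : realFieldType) (n : nat) c (cs : cstate R n) i k v w r q :
  List.In q (on_reply c cs i k v w r).1.2 ->
  psrc q = Cli n c /\ pbody q = Request _ (c_next cs) false v reg0 /\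
  (on_reply c cs i k v w r).1.1 = (start_ph1 c v cs (match c_phase cs with Ph1 o _ _ => o | Ph2 o _ _ _ => o | _ => OpRead end)).1.
Proof.
rewrite /on_reply; case: (c_phase cs) => //= [o k' col|o r2 k' col];
  (case: eqP => // _; case: eqP => // _; case: ifP => // _ /= /in_bcast [-> ->] //).
Qed.

Lemma on_reply_lbl (R : realFieldType) (n : nat) c (cs : cstate R n) i k v w r :
  (on_reply c cs i k v w r).2 = LInternal \/
  ((on_reply c cs i k v w r).2 = LStart c /\ exists o,
    (on_reply c cs i k v w r).1.1 = CState v (Ph1 o (c_next cs) (fun _ => None)) (c_next cs).+1).
Proof.
rewrite /on_reply; case: (c_phase cs) => /= [|o k' col|o r2|o r2 k' col]; try by left.
all: (case: eqP => _; [case: eqP => _; [by left|case: ifP => _; [right; split => //; by exists o|by left]]|by left]).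
Qed.

Lemma on_reply_next (R : realFieldType) (n : nat) c (cs : cstate R n) i k v w r :
  (c_next cs <= c_next (on_reply c cs i k v w r).1.1)%N.
Proof.
rewrite /on_reply; case: (c_phase cs) => //= [o k' col|o r2 k' col];
  (case: eqP => //= _; case: eqP => //= _; case: ifP => //= _).
Qed.

Lemma passed_install (n : nat) (s : sstate n) w : passed s w -> passed (install s) w.
Proof. rewrite /passed /= => /orP [H|/andP [/eqP -> _]]; apply/orP; left; lia. Qed.

Ltac srv_case := let j := fresh "j" in move=> j; rewrite /upd; case: eqP => [->|] //=.

Lemma step_mono (R : realFieldType) (n f : nat) (wt : nat -> 'I_n -> R) g l g' :
  step wt f g l g' ->
  (forall i, s_cview (srv g i) <= s_cview (srv g' i))%N /\
  (forall i w, passed (srv g i) w -> passed (srv g' i) w) /\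
  (forall c, c_next (cli g c) <= c_next (cli g' c))%N.
Proof.
case => /= *; (split; [|split]); try srv_case;
  try (move=> *; exact: passed_install);
  try (move=> d; rewrite /updc; case: eqP => [->|] //=);
  try (move=> w; rewrite /passed /= => /orP [->|/andP [-> _]] //; rewrite orbT //).
all: try exact: on_reply_next.
all: try (rewrite /passed /=; by move=> w /orP [->|/andP [-> _]] //; rewrite orbT).
all: by move=> *.
Qed.

Lemma srv_class (R : realFieldType) (n f : nat) (wt : nat -> 'I_n -> R) g l g' :
  step wt f g l g' -> forall j,
  srv g' j = srv g j \/
  (s_cview (srv g' j) = s_cview (srv g j) /\ s_sus (srv g' j) = s_sus (srv g j) /\
   s_changing (srv g' j) = s_changing (srv g j) /\ s_enabled (srv g' j) = s_enabled (srv g j)) \/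
  srv g' j = start_vc (srv g j) \/
  (srv g' j = install (srv g j) /\ n%:R / 2 < su_weight wt (srv g j) (s_cview (srv g j))) \/
  (exists j' r w, srv g' j = recv_su (srv g j) j' r w /\
     List.In (Pkt (Srv j') (Srv j) (StateUpdate _ r w)) (net g)).
Proof.
move=> H j; case: H => /=; intros; try by left.
all: rewrite /upd; case: (j =P i) => [->|_]; try by left.
all: try (right; left; done).
all: try (right; right; left; done).
all: try (right; right; right; left; done).
right; right; right; right; do 3 eexists; split; first reflexivity.
match goal with E : net _ = _ |- _ => rewrite E end; apply/in_cat; right; left; reflexivity.
Qed.

Lemma cli_class (R : realFieldType) (n f : nat) (wt : nat -> 'I_n -> R) g l g' :
  step wt f g l g' -> forall c,
  c_cview (cli g' c) = c_cview (cli g c) \/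
  exists p k w r, List.In p (net g) /\ pbody p = Reply k (c_cview (cli g' c)) w r.
Proof.
move=> H d; case: H => /=; intros; try by left.
all: rewrite /updc; case: (d =P c) => [->|_] //=; try by left.
rewrite /on_reply; case: (c_phase _) => /=; try by left.
all: move=> *; case: eqP => _ /=; try by left.
all: case: eqP => _ /=; try by left.
all: case: ifP => _ /=; try by left.
all: right; exists (Pkt (Srv i) (Cli n c) (Reply k v w r)); do 3 eexists; split; last reflexivity.
all: match goal with E : net _ = _ |- _ => rewrite E end; apply/in_cat; right; left; reflexivity.
Qed.

Lemma net_class (R : realFieldType) (n f : nat) (wt : nat -> 'I_n -> R) g l g' :
  step wt f g l g' -> forall q, List.In q (net g') ->
  List.In q (net g) \/
  (exists i w, psrc q = Srv i /\ pbody q = ChangeView _ w) \/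
  (exists i r, psrc q = Srv i /\ pbody q = StateUpdate _ r (s_cview (srv g i)) /\
      srv g' i = start_vc (srv g i)) \/
  (exists i c k b v r, psrc q = Srv i /\ pdst q = Cli n c /\
      List.In (Pkt (Cli n c) (Srv i) (Request _ k b v r)) (net g) /\ s_enabled (srv g i) /\
      pbody q = (on_request wt i (srv g i) k b v r).2) \/
  (exists c k b v r, psrc q = Cli n c /\ pbody q = Request _ k b v r /\ (k < c_next (cli g' c))%N).
Proof.
move=> H q; case: H => /= [g0 i ? ?|g0 i ? ?|g0 i ? ? ?|g0 i ? ? ?|g0 i a w l1 l2 E ?
 |g0 i j r v l1 l2 E ?|g0 i c k b v r l1 l2 E ? ?|g0 c i k v w r l1 l2 E|g0 c o ?
 |g0 c o k col ? ?|g0 c o r ?|g0 c o r k col ? ?] Hq; try by left.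
- move: Hq => /in_cat [?|/in_cat [/in_bcast [? ?]|/in_bcast [? ?]]]; [by left| |].
  + by right; left; eauto.
  + by right; right; left; exists i, (s_reg (srv g0 i)); rewrite /upd eqxx.
- move: Hq => /in_cat [?|/in_cat [/in_bcast [? ?]|/in_bcast [? ?]]]; [by left| |].
  + by right; left; eauto.
  + by right; right; left; exists i, (s_reg (srv g0 i)); rewrite /upd eqxx.
- by left; move: Hq; rewrite E; apply: in_split.
- by left; move: Hq; rewrite E; apply: in_split.
- move: Hq => /in_cat [?|/in_cat [?|[<-|//]]].
  + by left; rewrite E; apply/in_cat; left.
  + by left; rewrite E; apply/in_cat; right; right.
  + right; right; right; left; exists i, c, k, b, v, r; do !split => //.
    by rewrite E; apply/in_cat; right; left.
- move: Hq => /in_cat [?|/in_cat [?|]].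
  + by left; rewrite E; apply/in_cat; left.
  + by left; rewrite E; apply/in_cat; right; right.
  + move=> /on_reply_pkts [Hs [Hb Hc]]; right; right; right; right.
    exists c; do 4 eexists; split; [exact: Hs|split; [exact: Hb|]].
    by rewrite /updc eqxx Hc.
- move: Hq => /in_cat [?|/in_bcast [Hs Hb]]; first by left.
  right; right; right; right; exists c; do 4 eexists; split; [exact: Hs|split; [exact: Hb|]].
  by rewrite /updc eqxx.
- move: Hq => /in_cat [?|/in_bcast [Hs Hb]]; first by left.
  right; right; right; right; exists c; do 4 eexists; split; [exact: Hs|split; [exact: Hb|]].
  by rewrite /updc eqxx.
Qed.

Lemma inv_step (R : realFieldType) (n f : nat) (wt : nat -> 'I_n -> R) g l g' :
  (forall v i, 0 <= wt v i) -> Inv wt g -> step wt f g l g' -> Inv wt g'.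
Proof.
move=> Hwt I H.
have [Hcv [Hps Hnx]] := step_mono H.
have Hlv := lastview_mono Hcv.
have Hs := srv_class H. have Hc := cli_class H. have Hn := net_class H.
case: I => I1 I2 I3 I4 I5 I6' I7' I8'; constructor.
- move=> i; case: (Hs i) => [->|[[_ [_ [-> ->]]]|[->|[[-> _]|[j' [r [w [-> _]]]]]]]] //=; exact: I1.
- move=> c; case: (Hc c) => [->|[p [k [w [r [Hin Hb]]]]]].
  + exact: leq_trans (I2 c) Hlv.
  + exact: leq_trans (I3 _ _ _ _ _ Hin Hb) Hlv.
- move=> p k v w r Hin Hb.
  case: (Hn p Hin) => [Hold|[[i [w' [_ Hb']]]|[[i [r' [_ [Hb' _]]]]|[[i [c [k' [b [v' [r' [Hs' [_ [_ [_ Hb']]]]]]]]]]|[c [k' [b [v' [r' [_ [Hb' _]]]]]]]]]]];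
    rewrite ?Hb' in Hb => //.
  + exact: leq_trans (I3 _ _ _ _ _ Hold Hb) Hlv.
  + rewrite /on_request /= in Hb; case: Hb => _ <- _ _.
    exact: leq_trans (lastview_ge g i) Hlv.
- move=> p c k v w r Hin Hd Hb.
  case: (Hn p Hin) => [Hold|[[i [w' [_ Hb']]]|[[i [r' [_ [Hb' _]]]]|[[i [c' [k' [b [v' [r' [Hs' [Hd' [Hreq [_ Hb']]]]]]]]]]|[c' [k' [b [v' [r' [_ [Hb' _]]]]]]]]]]];
    rewrite ?Hb' in Hb => //.
  + exact: leq_trans (I4 _ _ _ _ _ _ Hold Hd Hb) (Hnx c).
  + rewrite /on_request /= in Hb; case: Hb => <- _ _ _.
    rewrite Hd in Hd'; case: Hd' => ->.
    exact: leq_trans (I5 _ _ _ _ _ _ Hreq erefl erefl) (Hnx c').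
- move=> p c k b v r Hin Hsrc Hb.
  case: (Hn p Hin) => [Hold|[[i [w' [_ Hb']]]|[[i [r' [_ [Hb' _]]]]|[[i [c' [k' [b' [v' [r' [Hs' [Hd' [Hreq [_ Hb']]]]]]]]]]|[c' [k' [b' [v' [r' [Hs' [Hb' Hk]]]]]]]]]]];
    rewrite ?Hb' in Hb => //.
  + exact: leq_trans (I5 _ _ _ _ _ _ Hold Hsrc Hb) (Hnx c).
  + rewrite Hsrc in Hs'; case: Hs' => ->; case: Hb => <- _ _ _; exact: Hk.
- move=> w Hw.
  have Hsum : forall w, \sum_(j < n) (if passed (srv g j) w then wt w j else 0) <=
                        \sum_(j < n) (if passed (srv g' j) w then wt w j else 0).
    move=> w0; apply: ler_sum => j _; case: ifP => Hj; first by rewrite (Hps _ _ Hj).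
    by case: ifP.
  case: (ltnP w (lastview g)) => Hwl; first exact: lt_le_trans (I6' w Hwl) (Hsum w).
  have [j Hj] := ltn_bigmax_ex Hw.
  have Hjl := lastview_ge g j.
  case: (Hs j) => [E|[[E _]|[E|[[E Hsu]|[j' [r [w' [E _]]]]]]]]; rewrite E /= in Hj.
  + lia.
  + lia.
  + lia.
  + have Hwe : w = s_cview (srv g j) by lia.
    rewrite Hwe in Hsu *.
    apply: lt_le_trans Hsu _; rewrite /su_weight big_mkcond /=.
    apply: ler_sum => k _; case: ifP => Hk.
    * by rewrite (Hps _ _ (I7' _ _ _ Hk)).
    * by case: ifP.
  + lia.
- move=> i j w Hne.
  case: (Hs i) => [E|[[_ [E _]]|[E|[[E _]|[j' [r [w' [E Hin]]]]]]]]; rewrite E /= in Hne.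
  + exact: Hps _ _ (I7' _ _ _ Hne).
  + exact: Hps _ _ (I7' _ _ _ Hne).
  + exact: Hps _ _ (I7' _ _ _ Hne).
  + exact: Hps _ _ (I7' _ _ _ Hne).
  + move: Hne; case: ifP => [/andP [/eqP -> /eqP ->] _|_ Hne].
    * exact: Hps _ _ (I8' _ _ _ _ Hin erefl erefl).
    * exact: Hps _ _ (I7' _ _ _ Hne).
- move=> p j r w Hin Hsrc Hb.
  case: (Hn p Hin) => [Hold|[[i [w' [_ Hb']]]|[[i [r' [Hs' [Hb' E]]]]|[[i [c' [k' [b' [v' [r' [Hs' [Hd' [Hreq [_ Hb']]]]]]]]]]|[c' [k' [b' [v' [r' [Hs' [Hb' Hk]]]]]]]]]]];
    rewrite ?Hb' in Hb => //.
  + exact: Hps _ _ (I8' _ _ _ _ Hold Hsrc Hb).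
  + rewrite Hsrc in Hs'; case: Hs' => Hji; subst i.
    case: Hb => _ <-; rewrite E /passed /= eqxx orbT //.
Qed.

Lemma inv_init (R : realFieldType) (n : nat) (wt : nat -> 'I_n -> R) : Inv wt (init R n).
Proof.
have Hlv : lastview (init R n) = 0%N.
  by apply/eqP; rewrite -leqn0; apply/bigmax_leqP.
constructor => //=; rewrite ?Hlv //.
Qed.

Definition net_ok (R : realFieldType) (n : nat) (wt : nat -> 'I_n -> R) (sa : 'I_n -> sstate n)
  c k v0 (g : gstate R n) : Prop :=
  forall p i k' v w r, List.In p (net g) -> psrc p = Srv i -> pdst p = Cli n c ->
    pbody p = Reply k' v w r -> k' = k -> v = v0 -> odflt 0 w <= wt v0 i /\ ~~ passed (sa i) v0.

Definition ph_ok (R : realFieldType) (n : nat) (wt : nat -> 'I_n -> R) (sa : 'I_n -> sstate n)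
  k v0 (cs : cstate R n) : Prop :=
  c_cview cs = v0 /\
  match c_phase cs with
  | Ph1 _ k' col => k' = k /\ forall i w r, col i = Some (w, r) -> w <= wt v0 i /\ ~~ passed (sa i) v0
  | Ph2 _ _ k' col => k' = k /\ forall i w, col i = Some w -> w <= wt v0 i /\ ~~ passed (sa i) v0
  | _ => True end.

Lemma T_net (R : realFieldType) (n f : nat) (wt : nat -> 'I_n -> R) g l g' sa c k v0 :
  (forall v i, 0 <= wt v i) -> Inv wt g -> step wt f g l g' ->
  (forall i, passed (sa i) v0 -> passed (srv g i) v0) ->
  net_ok wt sa c k v0 g -> net_ok wt sa c k v0 g'.
Proof.
move=> Hwt I H Hmono Hok p i k' v w r Hin Hs Hd Hb Hk Hv.
have Hn := net_class H.
case: (Hn p Hin) => [Hold|[[i0 [w' [_ Hb']]]|[[i0 [r' [_ [Hb' _]]]]|[[i0 [c' [k0 [b' [v' [r' [Hs' [Hd' [Hreq [Hen Hb']]]]]]]]]]|[c' [k0 [b' [v' [r' [Hs' [Hb' Hk0]]]]]]]]]]];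
  rewrite ?Hb' in Hb => //.
- exact: Hok Hold Hs Hd Hb Hk Hv.
- rewrite Hs in Hs'; case: Hs' => Hii; subst i0.
  rewrite /on_request /= in Hb; case: Hb => _ Ev Ew _.
  split.
  + rewrite -Ew; case: eqP => /= [E|_]; last exact: Hwt.
    by rewrite Ev Hv.
  + apply/negP => /Hmono; rewrite /passed -Hv -Ev ltnn eqxx /=.
    by apply/negP; apply: inv_en I _ Hen.
Qed.

Lemma T_cli (R : realFieldType) (n f : nat) (wt : nat -> 'I_n -> R) g l g' sa c k v0 :
  step wt f g l g' -> l <> LStart c ->
  net_ok wt sa c k v0 g -> ph_ok wt sa k v0 (cli g c) -> ph_ok wt sa k v0 (cli g' c).
Proof.
case => /= [g0 i ? ?|g0 i ? ?|g0 i ? ? ?|g0 i ? ? ?|g0 i a w l1 l2 E ?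
 |g0 i j r v l1 l2 E ?|g0 i c' k' b v r l1 l2 E ? ?|g0 c0 i k' v w r l1 l2 E|g0 c0 o ?
 |g0 c0 o k' col ? ?|g0 c0 o r ?|g0 c0 o r k' col ? ?] //; rewrite /updc;
 (case: (c =P c0) => [Ec|_]; [subst c0|by []]) => Hl Hok.
- rewrite /on_reply in Hl *.
  case Hph: (c_phase (cli g0 c)) => [|o k1 col|o r2|o r2 k1 col] //=; rewrite Hph in Hl.
  + case E1: (k' == k1); rewrite /= ?E1 in Hl *; last exact: id.
    case E2: (v == c_cview (cli g0 c)); rewrite /= ?E2 in Hl *.
    * rewrite /ph_ok Hph /= => -[Hcv [Hk1 Hcol]]; split => //; split => // j w' r'.
      rewrite /upd; case: eqP => [->|_]; last exact: Hcol.
      case=> <- _; apply: (Hok (Pkt (Srv i) (Cli n c) (Reply k' v w r)) i k' v w r) => //.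
      - by rewrite E; apply/in_cat; right; left.
      - by rewrite (eqP E1).
      - by rewrite (eqP E2).
    * case E3: (c_cview (cli g0 c) < v)%N; rewrite /= ?E3 in Hl *; last exact: id.
      by exfalso; apply: Hl.
  + case E1: (k' == k1); rewrite /= ?E1 in Hl *; last exact: id.
    case E2: (v == c_cview (cli g0 c)); rewrite /= ?E2 in Hl *.
    * rewrite /ph_ok Hph /= => -[Hcv [Hk1 Hcol]]; split => //; split => // j w'.
      rewrite /upd; case: eqP => [->|_]; last exact: Hcol.
      case=> <-; apply: (Hok (Pkt (Srv i) (Cli n c) (Reply k' v w r)) i k' v w r) => //.
      - by rewrite E; apply/in_cat; right; left.
      - by rewrite (eqP E1).
      - by rewrite (eqP E2).
    * case E3: (c_cview (cli g0 c) < v)%N; rewrite /= ?E3 in Hl *; last exact: id.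
      by exfalso; apply: Hl.
- by move: Hl.
- by rewrite /ph_ok /= => -[-> _].
- by move: Hl.
- by rewrite /ph_ok /= => -[-> _].
Qed.

Lemma T_start (R : realFieldType) (n f : nat) (wt : nat -> 'I_n -> R) g g' sa c :
  Inv wt g -> step wt f g (LStart c) g' ->
  net_ok wt sa c (c_next (cli g c)) (c_cview (cli g' c)) g' /\
  ph_ok wt sa (c_next (cli g c)) (c_cview (cli g' c)) (cli g' c).
Proof.
move=> I H; split.
- move=> p i k' v w r Hin Hs Hd Hb Hk Hv.
  have Hn := net_class H.
  case: (Hn p Hin) => [Hold|[[i0 [w' [_ Hb']]]|[[i0 [r' [_ [Hb' _]]]]|[[i0 [c' [k0 [b' [v' [r' [Hs' [Hd' [Hreq [Hen Hb']]]]]]]]]]|[c' [k0 [b' [v' [r' [Hs' [Hb' Hk0]]]]]]]]]]];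
    rewrite ?Hb' in Hb => //.
  + have := inv_fr_rep I Hold Hd Hb; by rewrite Hk ltnn.
  + rewrite /on_request /= in Hb; case: Hb => Ek _ _ _.
    rewrite Hd in Hd'; case: Hd' => Ec; subst c'.
    have := inv_fr_req I Hreq erefl erefl; by rewrite Ek Hk ltnn.
- remember (LStart c) as L eqn:EL.
  case: H EL => /= [g0 i ? ?|g0 i ? ?|g0 i ? ? ?|g0 i ? ? ?|g0 i a w l1 l2 E ?
   |g0 i j r v l1 l2 E ?|g0 i c' k' b v r l1 l2 E ? ?|g0 c0 i k' v w r l1 l2 E|g0 c0 o ?
   |g0 c0 o k' col ? ?|g0 c0 o r ?|g0 c0 o r k' col ? ?] // EL.
  + case: (on_reply_lbl c0 (cli g0 c0) i k' v w r) => [Hl|[Hl [o Ho]]]; rewrite Hl // in EL.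
    case: EL => Ec; subst c0.
    by rewrite /updc eqxx Ho /ph_ok /=.
  + case: EL => Ec; subst c0.
    by rewrite /updc eqxx /ph_ok /=.
  + case: EL => Ec; subst c0.
    by rewrite /updc eqxx /ph_ok /=.
Qed.

Lemma finish_inv (R : realFieldType) (n f : nat) (wt : nat -> 'I_n -> R) g g' c :
  step wt f g (LFinish c) g' ->
  (exists o k col, c_phase (cli g c) = Ph1 o k col /\ n%:R / 2 < sum1 col) \/
  (exists o r k col, c_phase (cli g c) = Ph2 o r k col /\ n%:R / 2 < sum2 col).
Proof.
move=> H; remember (LFinish c) as L eqn:EL.
case: H EL => /= [g0 i ? ?|g0 i ? ?|g0 i ? ? ?|g0 i ? ? ?|g0 i a w l1 l2 E ?
   |g0 i j r v l1 l2 E ?|g0 i c' k' b v r l1 l2 E ? ?|g0 c0 i k' v w r l1 l2 E|g0 c0 o ?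
   |g0 c0 o k' col H1 H2|g0 c0 o r ?|g0 c0 o r k' col H1 H2] // EL.
- by case: (on_reply_lbl c0 (cli g0 c0) i k' v w r) => [Hl|[Hl _]]; rewrite Hl in EL.
- case: EL => <-; left; by exists o, k', col.
- case: EL => <-; right; by exists o, r, k', col.
Qed.

Lemma trace_inv (R : realFieldType) (n f : nat) (wt : nat -> 'I_n -> R) (g : nat -> gstate R n) l t :
  (forall v i, 0 <= wt v i) -> g 0%N = init R n ->
  (forall u, (u <= t)%N -> step wt f (g u) (l u) (g u.+1)) ->
  forall u, (u <= t.+1)%N -> Inv wt (g u).
Proof.
move=> Hwt H0 Hst; elim=> [|u IH] Hu; first by rewrite H0; apply: inv_init.
apply: inv_step Hwt (IH (ltnW Hu)) (Hst u Hu).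
Qed.

Lemma trace_mono (R : realFieldType) (n f : nat) (wt : nat -> 'I_n -> R) (g : nat -> gstate R n) l t a :
  (forall u, (u <= t)%N -> step wt f (g u) (l u) (g u.+1)) ->
  forall d, ((a + d)%N <= t.+1)%N -> forall i w, passed (srv (g a) i) w -> passed (srv (g (a + d)%N) i) w.
Proof.
move=> Hst; elim=> [|d IH] Hd i w Hp; first by rewrite addn0.
have [_ [Hps _]] := step_mono (Hst (a + d)%N ltac:(rewrite -ltnS -addnS; exact: Hd)).
rewrite addnS; apply: Hps; apply: IH => //; lia.
Qed.

Lemma sum_split (R : realFieldType) (n : nat) (P : 'I_n -> bool) (x : 'I_n -> R) :
  \sum_(j < n) (if P j then x j else 0) + \sum_(j < n) (if ~~ P j then x j else 0) = \sum_(j < n) x j.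
Proof. rewrite -big_split; apply: eq_bigr => j _; by case: (P j); rewrite /= ?addr0 ?add0r. Qed.

Local Close Scope ring_scope.

Theorem lemma7 (R : realFieldType) (n f : nat) (wt : nat -> 'I_n -> R)
    (g : nat -> gstate R n) (l : nat -> label) (c t0 t : nat) :
  (2 * f + 1 <= n)%N ->
  weights_ok f wt ->
  g 0%N = init R n ->
  (forall u, (u <= t)%N -> step wt f (g u) (l u) (g u.+1)) ->
  l t0 = LStart c -> (t0 < t)%N ->
  (forall u, (t0 < u < t)%N -> l u <> LStart c) ->
  l t = LFinish c ->
  exists t', (t0 < t' <= t)%N /\ lastview (g t') = c_cview (cli (g t) c).
Proof.
move=> Hnf Hw H0 Hst Hl0 Ht0 Hmid Hlt.
have Hwt : forall v i, (0 <= wt v i)%R.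
  move=> v i; have [H1 _] := Hw.1 v i.
  rewrite leNgt; apply/negP => Hneg.
  have : (2%:R * (n - f)%:R * wt v i <= 0)%R.
    by apply: mulr_ge0_le0; [apply: mulr_ge0|apply: ltW].
  by move=> /(lt_le_trans H1); rewrite ltNge ler0n.
have Hinv := trace_inv Hwt H0 Hst.
set a := t0.+1.
have Hst0 := Hst t0 (ltnW Ht0); rewrite Hl0 in Hst0.
have [Hnet0 Hph0] := T_start (srv (g a)) (Hinv t0 (leqW (ltnW Ht0))) Hst0.
set k := c_next (cli (g t0) c) in Hnet0 Hph0.
set v0 := c_cview (cli (g t0.+1) c) in Hnet0 Hph0.
have HT : forall d, (a + d <= t)%N ->
    net_ok wt (srv (g a)) c k v0 (g (a + d)%N) /\ ph_ok wt (srv (g a)) k v0 (cli (g (a + d)%N) c).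
  elim => [|d IH] Hd; first by rewrite addn0.
  have Hd' : (a + d <= t)%N by lia.
  have [IHn IHp] := IH Hd'.
  have Hstep := Hst (a + d)%N Hd'.
  have Hl : l (a + d)%N <> LStart c by apply: Hmid; apply/andP; split; lia.
  have Hmono : forall i, passed (srv (g a) i) v0 -> passed (srv (g (a + d)%N) i) v0.
    by move=> i; apply: (trace_mono Hst); lia.
  rewrite addnS; split.
  - have HI : Inv wt (g (a + d)%N) by apply: Hinv; lia.
    exact: T_net Hwt HI Hstep Hmono IHn.
  - exact: T_cli Hstep Hl IHn IHp.
have [Hn_t Hp_t] : net_ok wt (srv (g a)) c k v0 (g t) /\ ph_ok wt (srv (g a)) k v0 (cli (g t) c).
  by have := HT (t - a)%N; rewrite subnKC //; apply.
have Hstt := Hst t (leqnn t); rewrite Hlt in Hstt.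
have Hfin := finish_inv Hstt.
exists a; split; first by apply/andP; split.
case: Hp_t => Hcv Hph; rewrite Hcv.
have Ha : (a <= t.+1)%N by rewrite /a; lia.
have Hle : (v0 <= lastview (g a))%N := inv_cv (Hinv a Ha) c.
apply/eqP; rewrite eqn_leq Hle andbT leqNgt; apply/negP => Hlt'.
have Hmaj := inv_maj (Hinv a Ha) Hlt'.
have Htot := Hw.2 v0.
have Hnp : (n%:R / 2 < \sum_(j < n) (if ~~ passed (srv (g a) j) v0 then wt v0 j else 0))%R.
  case: Hfin => [[o [k1 [col [Hph' Hs]]]]|[o [r [k1 [col [Hph' Hs]]]]]]; rewrite Hph' in Hph;
    case: Hph => _ Hcol; apply: lt_le_trans Hs _; apply: ler_sum => j _.
  - case Hc: (col j) => [[w r']|] /=; last by case: ifP.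
    by have [Hw' ->] := Hcol j w r' Hc.
  - case Hc: (col j) => [w|] /=; last by case: ifP.
    by have [Hw' ->] := Hcol j w Hc.
have := sum_split (fun j => passed (srv (g a) j) v0) (wt v0).
move: Hmaj Hnp Htot; set S1 := (\sum_(j < n) _)%R; set S2 := (\sum_(j < n) _)%R; set S3 := (\sum_(j < n) _)%R.
clearbody S1 S2 S3; move=> h1 h2 h3 h4; clear -h1 h2 h3 h4; lra.
Qed.
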